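(* Let $(X,d)$ be a complete metric space and let $G:X\times X\to X$ be a mapping such that (a) $G(x,x)=x$ for all $x\in X$, and (b) for $x,y\in X$, $G(x,y)=x$ implies $y=x$. Let $T:X\to P_{cl}(X)$ be a multivalued operator with $SFix(T)\neq\emptyset$ and let $T_G(x)=\{G(x,u):u\in T(x)\}$ be the admissible perturbation of $T$ corresponding to $G$. Suppose there exist $\alpha,\beta,\gamma\ge0$ with $\alpha+\beta+\gamma<1$ such that $$H(T_G(x),T_G(y))\le\alpha d(x,y)+\beta D(x,T_G(y))+\gamma D(y,T_G(x))\quad\text{for all }x,y\in X.$$ Then: (i) $Fix(T)=SFix(T)=\{x^*\}$ for some $x^*\in X$; (ii) if additionally there exists $l\in(0,1)$ with $H(T(x),\{x^*\})\le l\,H(T_G(x),\{x^*\})$ for all $x\in X$, then for each $x\in X$ the sequence $(T^n(x))_{n\in\mathbb N}$ converges to $\{x^*\}$ with respect to $H$, i.e. $H(T^n(x),\{x^*\})\to0$; (iii) if additionally there exists $L>0$ such that $D(x,T_G(x))\le L\,D(x,T(x))$ for all $x\in X$, then for some $\xi\in(0,1)$, $$d(x,x^* )\le\frac{(1+\gamma)L}{(1-\alpha-\beta)\xi}D(x,T(x))\quad\text{for all }x\in X.$$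
   Context: $P_{cl}(X)$ is the family of nonempty closed subsets of $X$. $Fix(T)=\{x:x\in T(x)\}$, $SFix(T)=\{x:T(x)=\{x\}\}$. For nonempty $A,B\subseteq X$: $D(a,B)=\inf_{b\in B}d(a,b)$, $D(A,B)=\inf\{d(a,b):a\in A,b\in B\}$, $e(A,B)=\sup_{a\in A}D(a,B)$, $H(A,B)=\max\{e(A,B),e(B,A)\}$. Iterates: $T^0(x)=\{x\}$, $T^{n}(x)=\bigcup_{y\in T^{n-1}(x)}T(y)$. *)

(* Defs.v *)
From HB Require Import structures.
From mathcomp Require Import all_boot all_order all_algebra.
From mathcomp Require Import all_classical all_reals all_analysis.
Set Implicit Arguments. Unset Strict Implicit. Unset Printing Implicit Defensive.
Import Order.TTheory GRing.Theory Num.Theory.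
Local Open Scope classical_set_scope.
Local Open Scope ring_scope.

Definition is_metric (R : realType) (X : Type) (d : X -> X -> R) : Prop :=
  (forall x y, 0 <= d x y) /\
  (forall x y, d x y = 0 <-> x = y) /\
  (forall x y, d x y = d y x) /\
  (forall x y z, d x z <= d x y + d y z).

Definition dconv (R : realType) (X : Type) (d : X -> X -> R)
  (u : nat -> X) (l : X) : Prop :=
  forall eps : R, 0 < eps -> exists N : nat, forall n, (N <= n)%N -> d (u n) l < eps.

Definition dcauchy (R : realType) (X : Type) (d : X -> X -> R) (u : nat -> X) : Prop :=
  forall eps : R, 0 < eps -> exists N : nat, forall n m, (N <= n)%N -> (N <= m)%N ->
    d (u n) (u m) < eps.

Definition dcomplete (R : realType) (X : Type) (d : X -> X -> R) : Prop :=
  forall u : nat -> X, dcauchy d u -> exists l, dconv d u l.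

Definition dclosed (R : realType) (X : Type) (d : X -> X -> R) (A : set X) : Prop :=
  forall (u : nat -> X) (l : X), (forall n, A (u n)) -> dconv d u l -> A l.

Definition Pcl (R : realType) (X : Type) (d : X -> X -> R) (A : set X) : Prop :=
  A !=set0 /\ dclosed d A.

Definition Fix (X : Type) (T : X -> set X) : set X := [set x | T x x].
Definition SFix (X : Type) (T : X -> set X) : set X := [set x | T x = [set x]].

Definition Dpt (R : realType) (X : Type) (d : X -> X -> R) (a : X) (B : set X)
  : \bar R := ereal_inf [set (d a b)%:E | b in B].

Definition exc (R : realType) (X : Type) (d : X -> X -> R) (A B : set X) : \bar R :=
  ereal_sup [set Dpt d a B | a in A].

Definition Hd (R : realType) (X : Type) (d : X -> X -> R) (A B : set X) : \bar R :=
  Order.max (exc d A B) (exc d B A).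

Definition TG (X : Type) (G : X -> X -> X) (T : X -> set X) (x : X) : set X :=
  [set G x u | u in T x].

Fixpoint Titer (X : Type) (T : X -> set X) (n : nat) (x : X) : set X :=
  match n with
  | O => [set x]
  | S m => \bigcup_(y in Titer T m x) T y
  end.

(* Main.v *)
Require Import Defs.
From HB Require Import structures.
From mathcomp Require Import all_boot all_order all_algebra.
From mathcomp Require Import all_classical all_reals all_analysis.
From mathcomp Require Import ring lra.
Import Order.TTheory GRing.Theory Num.Theory.
Local Open Scope classical_set_scope.
Local Open Scope ring_scope.

Section Helpers.
Variables (R : realType) (X : Type) (d : X -> X -> R).
Local Open Scope ereal_scope.

Lemma Dpt_le a (B : set X) b : B b -> Dpt d a B <= (d a b)%:E.
Proof. by move=> Bb; apply: ereal_inf_lbound; exists b. Qed.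

Lemma Dpt_ge a (B : set X) (e : \bar R) :
  (forall b, B b -> e <= (d a b)%:E) -> e <= Dpt d a B.
Proof. by move=> H; apply: le_ereal_inf_tmp => _ [b Bb <-]; apply: H. Qed.

Lemma exc_ge (A B : set X) a : A a -> Dpt d a B <= exc d A B.
Proof. by move=> Aa; apply: ereal_sup_ubound; exists a. Qed.

Lemma exc_le (A B : set X) (e : \bar R) :
  (forall a, A a -> Dpt d a B <= e) -> exc d A B <= e.
Proof. by move=> H; apply: ge_ereal_sup => _ [a Aa <-]; apply: H. Qed.

Lemma Hd_ge1 A B : exc d A B <= Hd d A B.
Proof. by rewrite /Hd le_max lexx. Qed.

Lemma Hd_ge2 A B : exc d B A <= Hd d A B.
Proof. by rewrite /Hd le_max lexx orbT. Qed.

Lemma Hd_le A B e : exc d A B <= e -> exc d B A <= e -> Hd d A B <= e.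
Proof. by move=> h1 h2; rewrite /Hd ge_max h1 h2. Qed.

Lemma Dpt1 a b : Dpt d a [set b] = (d a b)%:E.
Proof.
apply/eqP; rewrite eq_le Dpt_le //=; apply: Dpt_ge => c ->; exact: lexx.
Qed.

Lemma exc1 b (A : set X) : exc d [set b] A = Dpt d b A.
Proof.
apply/eqP; rewrite eq_le exc_ge //= andbT; apply: exc_le => c ->; exact: lexx.
Qed.

Lemma Dpt_fin (hd : forall x y, (0 <= d x y)%R) a (B : set X) b : B b ->
  exists r : R, Dpt d a B = r%:E /\ (0 <= r)%R /\ (forall c, B c -> r <= d a c)%R.
Proof.
move=> Bb.
have h0 : 0 <= Dpt d a B by apply: Dpt_ge => c _; rewrite lee_fin.
have h1 := @Dpt_le a B b Bb.
case E: (Dpt d a B) h0 h1 => [r| |] //= h0 h1.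
exists r; split => //; split; first by rewrite -lee_fin.
by move=> c Bc; rewrite -lee_fin -E; exact: (@Dpt_le a B c Bc).
Qed.

End Helpers.
Arguments Dpt_le {R X d a B b}. Arguments Dpt_ge {R X d a B e}.
Arguments exc_ge {R X d A B a}. Arguments exc_le {R X d A B e}.
Arguments Hd_ge1 {R X d A B}. Arguments Hd_ge2 {R X d A B}.
Arguments Hd_le {R X d A B e}. Arguments Dpt1 {R X d a b}.
Arguments exc1 {R X d b A}. Arguments Dpt_fin {R X d} hd a {B b}.

Theorem mainTheorem3 (R : realType) (X : Type) (d : X -> X -> R)
  (G : X -> X -> X) (T : X -> set X) (alpha beta gamma : R) :
  is_metric d -> dcomplete d ->
  (forall x, G x x = x) ->
  (forall x y, G x y = x -> y = x) ->
  (forall x, Pcl d (T x)) ->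
  SFix T !=set0 ->
  0 <= alpha -> 0 <= beta -> 0 <= gamma -> alpha + beta + gamma < 1 ->
  (forall x y, (Hd d (TG G T x) (TG G T y) <=
      (alpha * d x y)%:E + beta%:E * Dpt d x (TG G T y)
      + gamma%:E * Dpt d y (TG G T x))%E) ->
  exists xs : X,
    Fix T = [set xs] /\ SFix T = [set xs] /\
    (forall l : R, 0 < l < 1 ->
        (forall x, (Hd d (T x) [set xs] <= l%:E * Hd d (TG G T x) [set xs])%E) ->
      forall x, Hd d (Titer T n x) [set xs] @[n --> \oo] --> 0%E) /\
    (forall L : R, 0 < L ->
        (forall x, (Dpt d x (TG G T x) <= L%:E * Dpt d x (T x))%E) ->
      exists xi : R, 0 < xi < 1 /\
        forall x, ((d x xs)%:E <=
          ((1 + gamma) * L / ((1 - alpha - beta) * xi))%:E * Dpt d x (T x))%E).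
Proof.
move=> [hd0 [hdeq [hsym htri]]] _ GG _ PT [x0 Sx0] ha hb hg hs Hc.
have TGx0 : TG G T x0 = [set x0].
  rewrite /TG Sx0; apply/seteqP; split => z.
    by move=> [u -> <-]; rewrite GG.
  by move=> ->; exists x0; rewrite ?GG.
have T_ne : forall x, exists u, T x u by move=> x; have [[u hu] _] := PT x; exists u.
have TG_ne : forall x, exists u, TG G T x u.
  by move=> x; have [u hu] := T_ne x; exists (G x u); exists u.
have Fixy : forall y, T y y -> y = x0.
  move=> y Tyy.
  have yTG : TG G T y y by exists y; rewrite ?GG.
  have := Hc x0 y; rewrite TGx0 Dpt1.
  have [r1 [E1 [r10 r1le]]] := Dpt_fin hd0 x0 yTG; rewrite E1.
  have low : ((d y x0)%:E <= Hd d [set x0] (TG G T y))%E.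
    apply: le_trans Hd_ge2; rewrite -Dpt1; exact: exc_ge.
  move=> h; have := le_trans low h; rewrite -!EFinM -!EFinD lee_fin => h2.
  have := r1le y yTG => h3; rewrite [d y x0]hsym in h2.
  have h4 : d x0 y <= 0 by nra.
  by apply/hdeq; rewrite hsym; apply/le_anti; rewrite h4 hd0.
exists x0; split.
  apply/seteqP; split => z; first exact: Fixy.
  by move=> ->; rewrite /Fix /= Sx0.
split.
  apply/seteqP; split => z.
    by move=> Sz; apply: Fixy; rewrite /= Sz.
  by move=> ->.
have key : forall x, exists r2, Dpt d x0 (TG G T x) = r2%:E /\ 0 <= r2 /\
   (forall c, TG G T x c -> r2 <= d x0 c) /\
   (Hd d (TG G T x) [set x0] <= ((alpha + beta) * d x x0 + gamma * r2)%:E)%E /\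
   r2 <= (alpha + beta) * d x x0 + gamma * r2.
  move=> x; have [u Tu] := TG_ne x.
  have [r2 [E2 [r20 r2le]]] := Dpt_fin hd0 x0 Tu.
  have hb2 : (Hd d (TG G T x) [set x0] <= ((alpha + beta) * d x x0 + gamma * r2)%:E)%E.
    have := Hc x x0; rewrite TGx0 Dpt1 E2 -!EFinM -!EFinD => h.
    by apply: (le_trans h); rewrite lee_fin; lra.
  exists r2; do 3 split => //; split => //.
  rewrite -lee_fin -E2 -exc1; exact: le_trans Hd_ge2 hb2.
split.
  move=> l /andP[l0 l1] Hl x.
  set k := (alpha + beta) / (1 - gamma).
  have g1 : 0 < 1 - gamma by lra.
  have k0 : 0 <= k by apply: divr_ge0; lra.
  have k1 : k < 1 by rewrite /k ltr_pdivrMr //; lra.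
  set c := l * k.
  have c0 : 0 <= c by apply: mulr_ge0; lra.
  have c1 : c < 1 by rewrite /c; nra.
  have step : forall y a, T y a -> d a x0 <= c * d y x0.
    move=> y a Tya.
    have [r2 [E2 [r20 [r2le [Hb Hr]]]]] := key y.
    have Hk : (Hd d (TG G T y) [set x0] <= (k * d y x0)%:E)%E.
      apply: (le_trans Hb); rewrite lee_fin /k mulrAC ler_pdivlMr //.
      have := hd0 y x0; nra.
    rewrite -lee_fin -Dpt1.
    apply: le_trans (exc_ge Tya) _.
    apply: le_trans Hd_ge1 _.
    apply: le_trans (Hl y) _.
    rewrite /c -mulrA EFinM; apply: lee_wpmul2l => //; rewrite lee_fin; lra.
  have Hit : forall n a, Titer T n x a -> d a x0 <= d x x0 * c ^+ n.
    elim => [|n IH] a /=.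
      by move=> ->; rewrite expr0 mulr1.
    move=> [y Hy Tya]; apply: (le_trans (step _ _ Tya)).
    rewrite exprS mulrCA; apply: ler_wpM2l => //; exact: IH.
  have Hne : forall n, exists a, Titer T n x a.
    elim => [|n [y Hy]]; first by exists x.
    by have [a Ta] := T_ne y; exists a; exists y.
  apply: (@squeeze_cvge _ _ _ _ (cst 0%E) _ (fun n => (d x x0 * c ^+ n)%:E)).
  - apply: nearW => n; apply/andP; split.
      apply: le_trans Hd_ge2; rewrite exc1; apply: Dpt_ge => b _.
      by rewrite lee_fin.
    apply: Hd_le.
      by apply: exc_le => a Ha; rewrite Dpt1 lee_fin; apply: Hit.
    rewrite exc1; have [a Ha] := Hne n.
    by apply: le_trans (Dpt_le Ha) _; rewrite lee_fin hsym; apply: Hit.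
  - exact: cvg_cst.
  - apply: cvg_EFin; first exact: nearW.
    have := @cvg_geometric R (d x x0) c; rewrite ger0_norm // => /(_ c1).
    by apply: cvg_trans; apply: near_eq_cvg; apply: nearW.
move=> L L0 HL.
have g1 : 0 < 1 - alpha - beta - gamma by lra.
have g2 : 0 < 1 - alpha - beta by lra.
set xi := (1 - alpha - beta - gamma) / (2 * (1 - alpha - beta)).
have Hxi : (1 - alpha - beta) * xi = (1 - alpha - beta - gamma) / 2.
  rewrite /xi; field; rewrite gt_eqF //; lra.
exists xi; split.
  apply/andP; split; first by apply: divr_gt0; lra.
  by rewrite /xi ltr_pdivrMr; lra.
move=> x.
have [u Tu] := TG_ne x.
have [g [Eg [g0 gle]]] := Dpt_fin hd0 x Tu.
have [v Tv] := T_ne x.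
have [t [Et [t0 tle]]] := Dpt_fin hd0 x Tv.
have Hgt : g <= L * t by have := HL x; rewrite Eg Et -EFinM lee_fin.
have [r2 [E2 [r20 [r2le [Hb Hr]]]]] := key x.
have Ha : d x x0 - ((alpha + beta) * d x x0 + gamma * r2) <= g.
  rewrite -lee_fin -Eg; apply: Dpt_ge => w Tw; rewrite lee_fin.
  have : ((d w x0)%:E <= ((alpha + beta) * d x x0 + gamma * r2)%:E)%E.
    rewrite -Dpt1; apply: le_trans (exc_ge Tw) _; exact: le_trans Hd_ge1 Hb.
  rewrite lee_fin => h; have := htri x w x0; lra.
have Hbb : r2 - d x x0 <= g.
  rewrite -lee_fin -Eg; apply: Dpt_ge => w Tw; rewrite lee_fin.
  have := r2le w Tw; have := htri x0 x w; rewrite [d x0 x]hsym; lra.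
rewrite Et -EFinM lee_fin Hxi mulrAC ler_pdivlMr; last lra.
have := hd0 x x0 => hD.
have h1 : gamma * (r2 - d x x0) <= gamma * g by apply: ler_wpM2l.
have h2 : (1 + gamma) * g <= (1 + gamma) * (L * t) by apply: ler_wpM2l; lra.
have h3 : 0 <= d x x0 * (1 - alpha - beta - gamma) by apply: mulr_ge0; lra.
nra.
Qed.
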